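(* Let $(V_{1},V_{2})$ be a pair of commuting isometries on a Hilbert space $\mathcal{H}$ with defect zero, i.e. $C(V_1,V_2)=0$. Let $(\mathcal{E},P,U)$ be the BCL triple for $(V_{1},V_{2})$. Let $\mathcal{E}_1= \operatorname{ran} P$ and $\mathcal{E}_2 = \operatorname{ran} P^\perp $. Then $\mathcal{E}_1,\mathcal{E}_2$ are reducing subspaces for $U$, i.e., $$\mathcal{E}=\mathcal{E}_1\oplus\mathcal{E}_2, \ U=\begin{pmatrix} U_1 & 0 \\ 0 & U_2 \end{pmatrix} \text{ and } P=\begin{pmatrix} I_{\mathcal{E}_1} & 0 \\ 0 & 0 \end{pmatrix}\text{ in } \mathcal{B}(\mathcal{E}_1\oplus \mathcal{E}_2)$$ for some unitaries $U_1$ and $U_2$ on $\mathcal{E}_1$ and $\mathcal{E}_2$ respectively. Also $\mathcal{H}=(H^2_{\mathbb{D}}\otimes \mathcal{E}_1) \oplus (H^2_{\mathbb{D}}\otimes \mathcal{E}_2) \oplus \mathcal{K}$ and in this decomposition, $$V_1= \begin{pmatrix} M_z\otimes I_{\mathcal{E}_1}& 0&0\\ 0& I_{H^2_{\mathbb{D}}}\otimes U_2^* & 0\\ 0&0&W_1 \end{pmatrix}, \quad V_2= \begin{pmatrix} I_{H^2_{\mathbb{D}}}\otimes U_1 & 0&0\\ 0& M_z\otimes I_{\mathcal{E}_2} & 0\\ 0&0&W_2 \end{pmatrix},$$ up to unitary equivalence, for some unitary $U_i$ on $\mathcal{E}_i, i=1,2$ and commuting unitaries $W_1, W_2$ on 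$\mathcal{K}$.
   Context: For commuting isometries $V_1,V_2$ on $\mathcal{H}$, the defect operator is $C(V_1,V_2)=I-V_1V_1^*-V_2V_2^*+V_1V_2V_2^*V_1^*$. $H^2_{\mathbb{D}}$ is the Hardy space of scalar-valued functions on the unit disc $\mathbb{D}$, $M_z$ is multiplication by the coordinate function $z$ on it, and $H^2_{\mathbb{D}}(\mathcal{E})$ is identified with $H^2_{\mathbb{D}}\otimes\mathcal{E}$. By the Berger–Coburn–Lebow theorem, up to unitary equivalence $\mathcal{H}=\mathcal{H}_p\oplus\mathcal{H}_u$ with both summands reducing, where there is a unique (up to unitary equivalence) triple $(\mathcal{E},P,U)$ consisting of a Hilbert space $\mathcal{E}$ (namely $\ker (V_1V_2)^*$), a projection $P$ on $\mathcal{E}$ and a unitary $U$ on $\mathcal{E}$, such that $\mathcal{H}_p=H^2_{\mathbb{D}}(\mathcal{E})$ and $(V_1|_{\mathcal{H}_p},V_2|_{\mathcal{H}_p})=(M_{\varphi_1},M_{\varphi_2})$ with $\varphi_1(z)=U^*(P^\perp+zP)$, $\varphi_2(z)=(P+zP^\perp)U$, while $V_1|_{\mathcal{H}_u},V_2|_{\mathcal{H}_u}$ are commuting unitaries. This triple $(\mathcal{E},P,U)$ is called the BCL triple for $(V_1,V_2)$. *)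

(* Defs.v *)
From mathcomp Require Import all_boot all_order all_algebra.
From mathcomp Require Import reals.
From mathcomp.real_closed Require Import complex.
Import Order.TTheory GRing.Theory Num.Theory.

Set Implicit Arguments.
Unset Strict Implicit.
Unset Printing Implicit Defensive.

Local Open Scope ring_scope.

Record hilbertSpace (R : realType) := HilbertSpace {
  hs_car :> lmodType R[i];
  hs_ip : hs_car -> hs_car -> R[i];
  hs_ip_linl : forall (a : R[i]) (x y z : hs_car),
      hs_ip (a *: x + y) z = a * hs_ip x z + hs_ip y z;
  hs_ip_conj : forall x y : hs_car, hs_ip y x = (hs_ip x y)^*;
  hs_ip_ge0 : forall x : hs_car, 0 <= hs_ip x x;
  hs_ip_eq0 : forall x : hs_car, hs_ip x x = 0 -> x = 0;
  hs_complete : forall u : nat -> hs_car,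
      (forall e : R[i], 0 < e -> exists N : nat, forall m n : nat,
          (N <= m)%N -> (N <= n)%N -> hs_ip (u m - u n) (u m - u n) < e) ->
      exists l : hs_car, forall e : R[i], 0 < e -> exists N : nat,
          forall n : nat, (N <= n)%N -> hs_ip (u n - l) (u n - l) < e
}.

Arguments hs_ip {R h}.
Notation "<< x , y >>" := (hs_ip x y) (format "<< x ,  y >>").

Section Operators.
Variable R : realType.

Definition hs_linear (H1 H2 : hilbertSpace R) (f : H1 -> H2) : Prop :=
  forall (a : R[i]) (x y : H1), f (a *: x + y) = a *: f x + f y.

Definition hs_adjoint (H1 H2 : hilbertSpace R) (T : H1 -> H2) (S : H2 -> H1) :=
  forall (x : H1) (y : H2), << T x, y >> = << x, S y >>.

Definition hs_isometry (H : hilbertSpace R) (V Vs : H -> H) : Prop :=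
  [/\ hs_linear V, hs_adjoint V Vs & forall x, Vs (V x) = x].

Definition hs_unitary (H1 H2 : hilbertSpace R) (U : H1 -> H2) (Us : H2 -> H1) :=
  [/\ hs_linear U, hs_adjoint U Us, (forall x, Us (U x) = x)
    & forall y, U (Us y) = y].

Definition hs_projection (H : hilbertSpace R) (P : H -> H) : Prop :=
  [/\ hs_linear P, hs_adjoint P P & forall x, P (P x) = P x].

Definition commute_op (H : hilbertSpace R) (T S : H -> H) : Prop :=
  forall x, T (S x) = S (T x).

Definition defect_zero (H : hilbertSpace R) (V1 V1s V2 V2s : H -> H) : Prop :=
  forall x, x - V1 (V1s x) - V2 (V2s x) + V1 (V2 (V2s (V1s x))) = 0.

Definition ran (H : hilbertSpace R) (T : H -> H) (x : H) : Prop :=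
  exists y, T y = x.
Definition perp (H : hilbertSpace R) (P : H -> H) : H -> H := fun x => x - P x.

Definition reducing (H : hilbertSpace R) (T Ts : H -> H) (M : H -> Prop) :=
  forall x, M x -> M (T x) /\ M (Ts x).

Definition series_to (f : nat -> R[i]) (l : R[i]) : Prop :=
  forall e : R[i], 0 < e -> exists N : nat, forall n : nat, (N <= n)%N ->
    `| \sum_(k < n) f k - l | < e.

(* H^2_D(E) = H^2_D (x) E is identified with the space of square-summable
   sequences of Taylor coefficients a : nat -> E  (f(z) = sum_n a_n z^n),
   with <f, g> = sum_n <a_n, b_n>. *)
Definition sq_summable (E : hilbertSpace R) (a : nat -> E) : Prop :=
  exists l, series_to (fun n => << a n, a n >>) l.

(* M_z (x) I_E : the shift on coefficient sequences *)
Definition shift (E : hilbertSpace R) (a : nat -> E) : nat -> E :=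
  fun n => match n with 0 => 0 | m.+1 => a m end.

(* M_{phi1} with phi1(z) = U^*(P^perp + z P) *)
Definition Mphi1 (E : hilbertSpace R) (P Us : E -> E) (a : nat -> E) : nat -> E :=
  fun n => Us (perp P (a n) + P (shift a n)).

(* M_{phi2} with phi2(z) = (P + z P^perp) U *)
Definition Mphi2 (E : hilbertSpace R) (P U : E -> E) (a : nat -> E) : nat -> E :=
  fun n => P (U (a n)) + perp P (U (shift a n)).

Definition is_BCL_triple (H : hilbertSpace R) (V1 V2 : H -> H)
    (E : hilbertSpace R) (P U Us : E -> E) : Prop :=
  [/\ hs_projection P, hs_unitary U Us &
  exists (Hu : hilbertSpace R) (Wu1 Wu1s Wu2 Wu2s : Hu -> Hu)
         (Phi : H -> (nat -> E) * Hu),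
    [/\ hs_unitary Wu1 Wu1s, hs_unitary Wu2 Wu2s, commute_op Wu1 Wu2 &
    (forall (c : R[i]) (x y : H),
        (forall n, (Phi (c *: x + y)).1 n = c *: (Phi x).1 n + (Phi y).1 n)
        /\ (Phi (c *: x + y)).2 = c *: (Phi x).2 + (Phi y).2) /\
    (* Phi preserves inner products *)
    (forall x y : H, series_to (fun n => << (Phi x).1 n, (Phi y).1 n >>)
                               (<< x, y >> - << (Phi x).2, (Phi y).2 >>)) /\
    (forall (a : nat -> E) (k : Hu), sq_summable a ->
        exists x : H, (forall n, (Phi x).1 n = a n) /\ (Phi x).2 = k) /\
    (forall x : H,
        (forall n, (Phi (V1 x)).1 n = Mphi1 P Us (Phi x).1 n) /\
        (Phi (V1 x)).2 = Wu1 (Phi x).2 /\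
        (forall n, (Phi (V2 x)).1 n = Mphi2 P U (Phi x).1 n) /\
        (Phi (V2 x)).2 = Wu2 (Phi x).2)]].

End Operators.

(* Main.v *)
Require Import Defs.
From mathcomp Require Import all_boot all_order all_algebra.
From mathcomp Require Import reals.
From mathcomp.real_closed Require Import complex.
From mathcomp Require Import ring.
From mathcomp Require Import classical_sets.
Import Order.TTheory GRing.Theory Num.Theory.
Local Open Scope ring_scope.
Set Implicit Arguments.
Unset Strict Implicit.

Section Series.
Variable R : realType.
Implicit Types (f g : nat -> R[i]) (l : R[i]).

Lemma series_unique f l1 l2 : series_to f l1 -> series_to f l2 -> l1 = l2.
Proof.
move=> h1 h2; apply/eqP; apply/negPn/negP => hne.
have d0 : 0 < `|l1 - l2| by rewrite normr_gt0 subr_eq0.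
have e0 : 0 < `|l1 - l2| / 2 by rewrite divr_gt0.
have [N1 HN1] := h1 _ e0; have [N2 HN2] := h2 _ e0.
have := HN1 (maxn N1 N2) (leq_maxl _ _); have := HN2 (maxn N1 N2) (leq_maxr _ _).
set S := \sum_(k < _) f k => a b.
have : `|l1 - l2| < `|l1 - l2| / 2 + `|l1 - l2| / 2.
  apply: (le_lt_trans (y := `|S - l1| + `|S - l2|)).
    rewrite -(normrN (S - l1)) (_ : l1 - l2 = - (S - l1) + (S - l2)); last by ring.
    exact: ler_normD.
  exact: ltrD.
by rewrite -splitr ltxx.
Qed.

Lemma series_ext f g l : (forall n, f n = g n) -> series_to f l -> series_to g l.
Proof.
move=> hfg h e e0; have [N HN] := h e e0; exists N => n hn.
rewrite (eq_bigr (fun k : 'I_n => f k)) ?HN // => k _; by rewrite hfg.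
Qed.

Lemma series_add f g a b : series_to f a -> series_to g b ->
  series_to (fun n => f n + g n) (a + b).
Proof.
move=> ha hb e e0.
have e2 : 0 < e / 2 by rewrite divr_gt0.
have [N1 H1] := ha _ e2; have [N2 H2] := hb _ e2.
exists (maxn N1 N2) => n hn.
rewrite big_split /=.
rewrite (_ : _ - _ = (\sum_(k < n) f k - a) + (\sum_(k < n) g k - b)); last by ring.
apply: (le_lt_trans (ler_normD _ _)); rewrite (splitr e); apply: ltrD.
  by apply: H1; apply: leq_trans hn; apply: leq_maxl.
by apply: H2; apply: leq_trans hn; apply: leq_maxr.
Qed.

Lemma series_scale f a c : series_to f a -> series_to (fun n => c * f n) (c * a).
Proof.
move=> ha e e0.
have [->|c0] := eqVneq c 0.
  by exists 0%N => n _; rewrite big1 ?mul0r ?subrr ?normr0 // => k _; rewrite mul0r.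
have ec : 0 < e / `|c| by rewrite divr_gt0 // normr_gt0.
have [N HN] := ha _ ec; exists N => n hn.
rewrite -mulr_sumr -mulrBr normrM.
have := HN n hn; rewrite ltr_pdivlMr ?normr_gt0 // mulrC.
by [].
Qed.

Lemma series_opp f a : series_to f a -> series_to (fun n => - f n) (- a).
Proof.
move=> h; have := @series_scale f a (-1) h.
rewrite mulN1r; apply: series_ext => n; by rewrite mulN1r.
Qed.

Lemma series_sub f g a b : series_to f a -> series_to g b ->
  series_to (fun n => f n - g n) (a - b).
Proof. by move=> ha hb; apply: series_add ha (series_opp hb). Qed.

Lemma series_fin f m : (forall n, (m <= n)%N -> f n = 0) ->
  series_to f (\sum_(k < m) f k).
Proof.
move=> hf e e0; exists m => n hn.
rewrite -(subnKC hn) big_split_ord /=.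
have -> : \sum_(i < n - m) f (m + i)%N = 0.
  by rewrite big1 // => k _; apply: hf; apply: leq_addr.
by rewrite addr0 subrr normr0.
Qed.

Lemma series_zero f l : (forall n, f n = 0) -> series_to f l -> l = 0.
Proof.
move=> hf h; apply: (series_unique h).
have := @series_fin f 0 (fun n _ => hf n); by rewrite big_ord0.
Qed.

Lemma series_one f l : (forall n, (1 <= n)%N -> f n = 0) -> series_to f l -> l = f 0%N.
Proof.
move=> hf h; apply: (series_unique h).
have := @series_fin f 1 hf; by rewrite big_ord1.
Qed.

End Series.

Section TB.
Local Open Scope complex_scope.
Variable R : realType.
Lemma normc_Re (z : R[i]) : (`|complex.Re z|)%:C <= `|z|.
Proof.
case: z => a b /=; rewrite normc_def lecR /= -sqrtr_sqr ler_sqrt ?lerDl ?sqr_ge0 //.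
by rewrite addr_ge0 ?sqr_ge0.
Qed.
Lemma normc_real (z : R[i]) : complex.Im z = 0 -> `|z| = (`|complex.Re z|)%:C.
Proof. by case: z => a b /= ->; rewrite normc_def /= expr0n addr0 sqrtr_sqr. Qed.
Lemma ge0_complex (z : R[i]) : 0 <= z -> z = (complex.Re z)%:C /\ 0 <= complex.Re z.
Proof. case: z => a b; rewrite lecE /= => /andP[/eqP -> h]; by split. Qed.
Lemma gt0_complex (z : R[i]) : 0 < z -> z = (complex.Re z)%:C /\ 0 < complex.Re z.
Proof. case: z => a b; rewrite ltcE /= => /andP[/eqP -> h]; by split. Qed.
Lemma le_complex (z w : R[i]) : z <= w -> complex.Re z <= complex.Re w.
Proof. by rewrite lecE => /andP[]. Qed.
End TB.

Section TC.
Local Open Scope complex_scope.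
Variable R : realType.
Local Notation Rc := (@complex.Re R).
Local Notation Ic := (@complex.Im R).

Lemma Re_sum n (f : nat -> R[i]) : Rc (\sum_(k < n) f k) = \sum_(k < n) Rc (f k).
Proof. by rewrite raddf_sum. Qed.
Lemma Im_sum n (f : nat -> R[i]) : Ic (\sum_(k < n) f k) = \sum_(k < n) Ic (f k).
Proof. by rewrite raddf_sum. Qed.

Lemma series_mono (f g : nat -> R[i]) l : (forall n, 0 <= g n) -> (forall n, g n <= f n) ->
  series_to f l -> exists l', series_to g l'.
Proof.
move=> g0 gf hf.
have f0 n : 0 <= f n by apply: le_trans (g0 n) (gf n).
have gR n : Ic (g n) = 0 by have [-> _] := ge0_complex (g0 n).
pose G n := \sum_(k < n) Rc (g k).
pose F n := \sum_(k < n) Rc (f k).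
have Gmono m n : (m <= n)%N -> G m <= G n.
  move=> hmn; rewrite /G -(subnKC hmn) big_split_ord /= lerDl.
  by apply: sumr_ge0 => k _; have [_ ->] := ge0_complex (g0 (m + k)%N).
have Fmono m n : (m <= n)%N -> F m <= F n.
  move=> hmn; rewrite /F -(subnKC hmn) big_split_ord /= lerDl.
  by apply: sumr_ge0 => k _; have [_ ->] := ge0_complex (f0 (m + k)%N).
have GF n : G n <= F n by apply: ler_sum => k _; apply: le_complex.
have [N HN] := hf 1 ltr01.
have bnd n : G n <= Rc l + 1.
  apply: (le_trans (GF n)); apply: (le_trans (Fmono _ (maxn n N) (leq_maxl _ _))).
  have := HN (maxn n N) (leq_maxr _ _).
  move/(le_lt_trans (normc_Re _)); rewrite -[1]/(1%:C) ltcR raddfB /= Re_sum -/(F _).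
  move=> h; rewrite -lerBlDl; apply: ltW; apply: le_lt_trans h; exact: ler_norm.
pose E := (fun x : R => exists n, x = G n).
have hE : has_sup E.
  split; first by exists (G 0%N), 0%N.
  by exists (Rc l + 1) => x [n ->]; apply: bnd.
exists (sup E)%:C => e e0.
have [-> epos] := gt0_complex e0.
have [x [n0 ->] hx] := sup_adherent epos hE.
exists n0 => n hn.
rewrite normc_real; last by rewrite raddfB /= Im_sum big1 ?subr0 // => k _.
rewrite ltcR raddfB /= Re_sum -/(G n).
have h1 : G n <= sup E by apply: sup_upper_bound => //; exists n.
have h2 : G n0 <= G n by apply: Gmono.
rewrite ler0_norm ?subr_le0 // opprB ltrBlDr.
by rewrite -ltrBlDl; apply: lt_le_trans hx h2.
Qed.
End TC.

Section HS.
Variable R : realType.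
Variable H : hilbertSpace R.
Implicit Types x y z u : H.

Lemma ip0l z : << (0 : H), z >> = 0.
Proof.
have := hs_ip_linl 1 (0 : H) 0 z; rewrite scaler0 addr0 mul1r => h.
by apply: (@addrI _ (<< (0 : H), z >>)); rewrite addr0 -h.
Qed.
Lemma ipDl x y z : << x + y, z >> = << x, z >> + << y, z >>.
Proof. by rewrite -{1}(scale1r x) hs_ip_linl mul1r. Qed.
Lemma ipZl a x z : << a *: x, z >> = a * << x, z >>.
Proof. by rewrite -(addr0 (a *: x)) hs_ip_linl ip0l addr0. Qed.
Lemma ipNl x z : << - x, z >> = - << x, z >>.
Proof. by rewrite -scaleN1r ipZl mulN1r. Qed.
Lemma ipBl x y z : << x - y, z >> = << x, z >> - << y, z >>.
Proof. by rewrite ipDl ipNl. Qed.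
Lemma ipDr x y z : << z, x + y >> = << z, x >> + << z, y >>.
Proof. by rewrite hs_ip_conj ipDl raddfD /= -!hs_ip_conj. Qed.
Lemma ipZr a x z : << z, a *: x >> = (a^*)%C * << z, x >>.
Proof. by rewrite hs_ip_conj ipZl rmorphM /= -!hs_ip_conj. Qed.
Lemma ip0r z : << z, (0 : H) >> = 0.
Proof. by rewrite hs_ip_conj ip0l raddf0. Qed.
Lemma ipNr x z : << z, - x >> = - << z, x >>.
Proof. by rewrite hs_ip_conj ipNl raddfN /= -hs_ip_conj. Qed.
Lemma ipBr x y z : << z, x - y >> = << z, x >> - << z, y >>.
Proof. by rewrite ipDr ipNr. Qed.
Lemma ip_eq0 x : (forall u, << u, x >> = 0) -> x = 0.
Proof. by move=> h; apply: hs_ip_eq0; apply: h. Qed.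
Lemma ip_inj x y : (forall u, << u, x >> = << u, y >>) -> x = y.
Proof.
move=> h; apply/eqP; rewrite -subr_eq0; apply/eqP; apply: ip_eq0 => u.
by rewrite ipBr h subrr.
Qed.
End HS.

Section Lin.
Variable R : realType.
Variables H1 H2 : hilbertSpace R.
Variable f : H1 -> H2.
Hypothesis hf : hs_linear f.
Lemma lin0 : f 0 = 0.
Proof.
have := hf 1 0 0; rewrite scaler0 addr0 scale1r => h.
by apply: (@addrI _ (f 0)); rewrite addr0 -h.
Qed.
Lemma linD x y : f (x + y) = f x + f y.
Proof. by rewrite -{1}(scale1r x) hf scale1r. Qed.
Lemma linZ a x : f (a *: x) = a *: f x.
Proof. by rewrite -(addr0 (a *: x)) hf lin0 addr0. Qed.
Lemma linN x : f (- x) = - f x.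
Proof. by rewrite -scaleN1r linZ scaleN1r. Qed.
Lemma linB x y : f (x - y) = f x - f y.
Proof. by rewrite linD linN. Qed.
End Lin.

Section Adj.
Variable R : realType.
Variables H1 H2 : hilbertSpace R.
Variables (T : H1 -> H2) (S : H2 -> H1).
Hypothesis hTS : hs_adjoint T S.
Lemma adj_r x y : << x, T y >> = << S x, y >>.
Proof. by rewrite hs_ip_conj hTS -hs_ip_conj. Qed.
Lemma adj0 : S 0 = 0.
Proof. by apply: ip_eq0 => u; rewrite -hTS ip0r. Qed.
End Adj.


Section Proj.
Variable R : realType.
Variable E : hilbertSpace R.
Variable P : E -> E.
Hypothesis hP : hs_projection P.
Implicit Types x y z : E.

Lemma Plin : hs_linear P. Proof. by case: hP. Qed.
Lemma Padj : hs_adjoint P P. Proof. by case: hP. Qed.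
Lemma PP x : P (P x) = P x. Proof. by case: hP. Qed.
Lemma Pperp x : P (perp P x) = 0.
Proof. by rewrite /perp (linB Plin) PP subrr. Qed.
Lemma perpP x : perp P (P x) = 0.
Proof. by rewrite /perp PP subrr. Qed.
Lemma perp_lin : hs_linear (perp P).
Proof. by move=> a x y; rewrite /perp Plin scalerBr opprD addrACA. Qed.
Lemma perpperp x : perp P (perp P x) = perp P x.
Proof. by rewrite {1}/perp Pperp subr0. Qed.
Lemma Pdecomp x : P x + perp P x = x.
Proof. by rewrite /perp addrC subrK. Qed.
Lemma ip_P_perp x y : << P x, perp P y >> = 0.
Proof. by rewrite Padj Pperp ip0r. Qed.
Lemma ip_perp_P x y : << perp P x, P y >> = 0.
Proof. by rewrite hs_ip_conj ip_P_perp raddf0. Qed.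
Lemma ip_split x y : << x, y >> = << P x, P y >> + << perp P x, perp P y >>.
Proof.
transitivity << P x + perp P x, P y + perp P y >>; first by rewrite !Pdecomp.
rewrite (ipDl (P x) (perp P x)) (ipDr (P y) (perp P y)) (ipDr (P y) (perp P y)).
by rewrite ip_P_perp ip_perp_P addr0 add0r.
Qed.
Lemma ipP_r x y : << P x, y >> = << P x, P y >>.
Proof.
transitivity << P x, P y + perp P y >>; first by rewrite Pdecomp.
by rewrite (ipDr (P y) (perp P y)) ip_P_perp addr0.
Qed.
Lemma normP_le x : << P x, P x >> <= << x, x >>.
Proof. by rewrite (ip_split x x) lerDl hs_ip_ge0. Qed.
Lemma ranP z : ran P z -> P z = z.
Proof. by case=> y <-; rewrite PP. Qed.
Lemma ranperp z : ran (perp P) z -> P z = 0.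
Proof. by case=> y <-; rewrite Pperp. Qed.
Lemma perp_eq0 z : perp P z = 0 -> P z = z.
Proof. by rewrite /perp => /eqP; rewrite subr_eq0 => /eqP <-. Qed.
End Proj.

Section Unit.
Variable R : realType.
Variable E : hilbertSpace R.
Variables U Us : E -> E.
Hypothesis hU : hs_unitary U Us.
Lemma Ulin : hs_linear U. Proof. by case: hU. Qed.
Lemma Uadj : hs_adjoint U Us. Proof. by case: hU. Qed.
Lemma UsU x : Us (U x) = x. Proof. by case: hU. Qed.
Lemma UUs x : U (Us x) = x. Proof. by case: hU. Qed.
Lemma Uslin : hs_linear Us.
Proof.
move=> a x y; rewrite -{1}(UUs x) -{1}(UUs y).
by rewrite -(linZ Ulin) -(linD Ulin) UsU.
Qed.
Lemma Uip x y : << U x, U y >> = << x, y >>.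
Proof. by rewrite Uadj UsU. Qed.
Lemma Usip x y : << Us x, Us y >> = << x, y >>.
Proof. by rewrite -Uadj UUs. Qed.
End Unit.

Section Iter.
Variable R : realType.
Variable E : hilbertSpace R.
Lemma iter_comm (f g : E -> E) n x : (forall x, f (g x) = g (f x)) ->
  iter n f (g x) = g (iter n f x).
Proof. by move=> h; elim: n => //= n ->; rewrite h. Qed.
Lemma iter_lin (f : E -> E) n : hs_linear f -> hs_linear (iter n f).
Proof. by move=> h; elim: n => [|n IH] a x y //; rewrite !iterS IH h. Qed.
Lemma iter_ip (f : E -> E) n x y : (forall a b, << f a, f b >> = << a, b >>) ->
  << iter n f x, iter n f y >> = << x, y >>.
Proof. by move=> h; elim: n => //= n IH; rewrite h. Qed.
Lemma iter_cancel (f g : E -> E) n x : (forall x, f (g x) = x) ->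
  iter n f (iter n g x) = x.
Proof.
move=> h; elim: n x => [|n IH] x //.
by rewrite iterSr iterS h IH.
Qed.
End Iter.


Section Model.
Variables (R : realType) (H E Hu : hilbertSpace R) (V1 V1s V2 V2s : H -> H)
  (P U Us : E -> E) (Wu1 Wu1s Wu2 Wu2s : Hu -> Hu) (Phi : H -> (nat -> E) * Hu).
Hypotheses (hV1 : hs_isometry V1 V1s) (hV2 : hs_isometry V2 V2s)
  (hdef : defect_zero V1 V1s V2 V2s) (hP : hs_projection P) (hU : hs_unitary U Us)
  (hW1 : hs_unitary Wu1 Wu1s) (hW2 : hs_unitary Wu2 Wu2s).
Hypothesis hlin : forall (c : R[i]) (x y : H),
        (forall n, (Phi (c *: x + y)).1 n = c *: (Phi x).1 n + (Phi y).1 n)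
        /\ (Phi (c *: x + y)).2 = c *: (Phi x).2 + (Phi y).2.
Hypothesis hip : forall x y : H, series_to (fun n => << (Phi x).1 n, (Phi y).1 n >>)
                               (<< x, y >> - << (Phi x).2, (Phi y).2 >>).
Hypothesis hsurj : forall (a : nat -> E) (k : Hu), sq_summable a ->
        exists x : H, (forall n, (Phi x).1 n = a n) /\ (Phi x).2 = k.
Hypothesis hint : forall x : H,
        (forall n, (Phi (V1 x)).1 n = Mphi1 P Us (Phi x).1 n) /\
        (Phi (V1 x)).2 = Wu1 (Phi x).2 /\
        (forall n, (Phi (V2 x)).1 n = Mphi2 P U (Phi x).1 n) /\
        (Phi (V2 x)).2 = Wu2 (Phi x).2.

Let V1lin : hs_linear V1. Proof. by case: hV1. Qed.
Let V1adj : hs_adjoint V1 V1s. Proof. by case: hV1. Qed.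
Let V1sV1 x : V1s (V1 x) = x. Proof. by case: hV1. Qed.
Let V2lin : hs_linear V2. Proof. by case: hV2. Qed.
Let V2adj : hs_adjoint V2 V2s. Proof. by case: hV2. Qed.
Let V2sV2 x : V2s (V2 x) = x. Proof. by case: hV2. Qed.

Lemma Phi_inj x y : (forall n, (Phi x).1 n = (Phi y).1 n) -> (Phi x).2 = (Phi y).2 -> x = y.
Proof.
move=> h1 h2.
have [d1 d2] := hlin (-1) y x.
have z1 n : (Phi ((-1) *: y + x)).1 n = 0 by rewrite d1 h1 scaleN1r addNr.
have z2 : (Phi ((-1) *: y + x)).2 = 0 by rewrite d2 h2 scaleN1r addNr.
have hs := hip ((-1) *: y + x) ((-1) *: y + x).
have e0 := series_zero (fun n => etrans (f_equal2 _ (z1 n) (z1 n)) (ip0l _)) hs.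
rewrite z2 ip0l subr0 in e0.
move: e0; move/hs_ip_eq0 => /eqP; rewrite scaleN1r addrC subr_eq0 => /eqP //.
Qed.

Lemma fin_sq (a : nat -> E) m : (forall n, (m <= n)%N -> a n = 0) -> sq_summable a.
Proof.
move=> h; exists (\sum_(k < m) << a k, a k >>); apply: series_fin => n hn.
by rewrite h // ip0l.
Qed.

Lemma Phi_ex (a : nat -> E) (k : Hu) m : (forall n, (m <= n)%N -> a n = 0) ->
  exists x : H, (forall n, (Phi x).1 n = a n) /\ (Phi x).2 = k.
Proof. by move=> h; apply: hsurj; apply: fin_sq h. Qed.

Lemma adj_dec x z w : x = V1 z + w -> (forall u, << V1 u, w >> = 0) -> V1s x = z.
Proof.
move=> hx hw; apply: ip_inj => u.
by rewrite -V1adj hx ipDr hw addr0 V1adj V1sV1.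
Qed.

Lemma orth_V1 w w0 : (forall n, (Phi w).1 n = if n is 0 then w0 else 0) ->
  (Phi w).2 = 0 -> perp P (U w0) = 0 -> forall u, << V1 u, w >> = 0.
Proof.
move=> hw1 hw2 hw0 u.
have hs := hip (V1 u) w.
have e0 : << V1 u, w >> - << (Phi (V1 u)).2, (Phi w).2 >> =
    << (Phi (V1 u)).1 0%N, (Phi w).1 0%N >>.
  by apply: (series_one _ hs) => -[|n] // _; rewrite hw1 ip0r.
rewrite hw2 ip0r subr0 in e0; rewrite e0.
have [h1 _] := hint u.
rewrite h1 hw1 /Mphi1 /shift (lin0 (Plin hP)) addr0.
rewrite -(UsU hU w0) (Usip hU) -(perp_eq0 hw0).
exact: ip_perp_P.
Qed.

Lemma factA f : perp P (Us (P f)) = 0.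
Proof.
have [w [hw1 hw2]] := @Phi_ex (fun n => if n is 0 then Us (P f) else 0) 0 1
   (fun n => if n is 0 then fun h => (ltac:(done)) else fun _ => erefl).
have hw0 : perp P (U (Us (P f))) = 0 by rewrite (UUs hU) perpP.
have V1sw : V1s w = 0.
  by apply: (adj_dec (z := 0) _ (orth_V1 hw1 hw2 hw0)); rewrite (lin0 V1lin) add0r.
have := hdef w.
rewrite V1sw (lin0 V1lin) (adj0 V2adj) (lin0 V2lin) (lin0 V1lin) subr0 addr0.
move/eqP; rewrite subr_eq0 => /eqP ew.
have [_ [_ [h2 _]]] := hint (V2s w).
set b := (Phi (V2s w)).1 in h2.
have e1 := h2 1%N; have e0 := h2 0%N.
rewrite -ew hw1 /Mphi2 /shift /= in e1 e0.
have pb : perp P (U (b 0%N)) = 0.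
  have := f_equal (perp P) e1.
  by rewrite (lin0 (perp_lin hP)) (linD (perp_lin hP)) (perpP hP) (perpperp hP) add0r.
rewrite hw1 (lin0 (Ulin hU)) (lin0 (perp_lin hP)) addr0 (perp_eq0 pb) in e0.
by rewrite e0.
Qed.

Lemma Phi_ex1 (e0 : E) : exists x : H,
  (forall n, (Phi x).1 n = if n is 0 then e0 else 0) /\ (Phi x).2 = 0.
Proof. by apply: (@Phi_ex _ 0 1) => -[|n]. Qed.

Lemma Phi_ex2 (e0 e1 : E) : exists x : H,
  (forall n, (Phi x).1 n = match n with 0 => e0 | 1 => e1 | _ => 0 end) /\ (Phi x).2 = 0.
Proof. by apply: (@Phi_ex _ 0 2) => -[|[|n]]. Qed.

Lemma factB f : perp P (U (P f)) = 0.
Proof.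
pose g := Us f.
have Ug : U g = f by rewrite /g (UUs hU).
pose v := U (P (U g)).
pose b0 := P (U (perp P (U g))) + perp P v.
pose b1 := perp P (U (perp P (U g))).
pose w0 := Us (P v).
have [y [hy1 hy2]] := Phi_ex1 g.
have [z [hz1 hz2]] := Phi_ex2 b0 b1.
have [w [hw1 hw2]] := Phi_ex1 w0.
have hw0 : perp P (U w0) = 0 by rewrite /w0 (UUs hU) (perpP hP).
have Pl := Plin hP; have pl := perp_lin hP; have Ul := Ulin hU; have Usl := Uslin hU.
have ex : V2 y = V1 z + w.
  apply: Phi_inj.
    move=> n; have [_ [_ [h2 _]]] := hint y; have [h1 _] := hint z.
    have [l1 _] := hlin 1 (V1 z) w.
    rewrite -{1}(scale1r (V1 z)) l1 scale1r h1 h2 /Mphi1 /Mphi2 /shift.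
    case: n => [|[|[|n]]] /=; rewrite ?hy1 ?hz1 ?hw1 /=.
    - rewrite (lin0 Ul) (lin0 pl) (lin0 Pl) !addr0.
      rewrite /b0 (linD pl) (perpP hP) (perpperp hP) add0r -(linD Usl) addrC.
      by rewrite Pdecomp /v (UsU hU).
    - rewrite (lin0 Ul) (lin0 Pl) add0r addr0.
      rewrite /b1 (perpperp hP) /b0 (linD Pl) (PP hP) (Pperp hP) addr0 addrC.
      by rewrite Pdecomp (UsU hU).
    - by rewrite (lin0 Ul) (lin0 Pl) (lin0 pl) /b1 (Pperp hP) !add0r (lin0 Usl) addr0.
    - by rewrite (lin0 Ul) (lin0 Pl) (lin0 pl) !addr0 (lin0 Usl).
  have [_ l2] := hlin 1 (V1 z) w.
  have [_ [h1 [_ h2]]] := hint y; have [_ [h1' _]] := hint z.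
  rewrite -{1}(scale1r (V1 z)) l2 scale1r h2 h1' hy2 hz2 hw2.
  by rewrite (lin0 (Ulin hW1)) (lin0 (Ulin hW2)) addr0.
have V1sx : V1s (V2 y) = z := adj_dec ex (orth_V1 hw1 hw2 hw0).
have hd := hdef (V2 y).
rewrite V2sV2 V1sx in hd.
move: hd; rewrite [V2 y - V1 z]addrC addrK addrC => /eqP; rewrite subr_eq0 => /eqP /(f_equal V1s).
rewrite !V1sV1 => ez.
have [_ [_ [h2 _]]] := hint (V2s z).
have := h2 0%N; rewrite ez hz1 /Mphi2 /shift /= (lin0 Ul) (lin0 pl) addr0 => eb0.
have : perp P b0 = 0 by rewrite eb0 (perpP hP).
by rewrite /b0 (linD pl) (perpP hP) add0r (perpperp hP) /v Ug.
Qed.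

Lemma UP f : U (P f) = P (U f).
Proof.
have h1 : P (U (P f)) = U (P f) by apply: perp_eq0; apply: factB.
have h2 : P (U (perp P f)) = 0.
  apply: ip_eq0 => u.
  rewrite (adj_r (Padj hP)) (adj_r (Uadj hU)).
  rewrite -(perp_eq0 (factA u)) (Padj hP) (Pperp hP) ip0r //.
rewrite -{2}(@Pdecomp _ _ P f) (linD (Ulin hU)) (linD (Plin hP)) h1 h2 addr0 //.
Qed.

Lemma UsP f : Us (P f) = P (Us f).
Proof. by rewrite -{1}(UUs hU f) -UP (UsU hU). Qed.

Lemma Uperp f : U (perp P f) = perp P (U f).
Proof. by rewrite /perp (linB (Ulin hU)) UP. Qed.

Lemma Usperp f : Us (perp P f) = perp P (Us f).
Proof. by rewrite /perp (linB (Uslin hU)) UsP. Qed.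

End Model.


Section Final.
Variables (R : realType) (H E Hu : hilbertSpace R) (V1 V1s V2 V2s : H -> H)
  (P U Us : E -> E) (Wu1 Wu1s Wu2 Wu2s : Hu -> Hu) (Phi : H -> (nat -> E) * Hu).
Hypotheses (hV1 : hs_isometry V1 V1s) (hV2 : hs_isometry V2 V2s)
  (hdef : defect_zero V1 V1s V2 V2s) (hP : hs_projection P) (hU : hs_unitary U Us)
  (hW1 : hs_unitary Wu1 Wu1s) (hW2 : hs_unitary Wu2 Wu2s) (hWc : commute_op Wu1 Wu2).
Hypothesis hlin : forall (c : R[i]) (x y : H),
        (forall n, (Phi (c *: x + y)).1 n = c *: (Phi x).1 n + (Phi y).1 n)
        /\ (Phi (c *: x + y)).2 = c *: (Phi x).2 + (Phi y).2.
Hypothesis hip : forall x y : H, series_to (fun n => << (Phi x).1 n, (Phi y).1 n >>)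
                               (<< x, y >> - << (Phi x).2, (Phi y).2 >>).
Hypothesis hsurj : forall (a : nat -> E) (k : Hu), sq_summable a ->
        exists x : H, (forall n, (Phi x).1 n = a n) /\ (Phi x).2 = k.
Hypothesis hint : forall x : H,
        (forall n, (Phi (V1 x)).1 n = Mphi1 P Us (Phi x).1 n) /\
        (Phi (V1 x)).2 = Wu1 (Phi x).2 /\
        (forall n, (Phi (V2 x)).1 n = Mphi2 P U (Phi x).1 n) /\
        (Phi (V2 x)).2 = Wu2 (Phi x).2.

Lemma final :
(* E1 = ran P and E2 = ran P^perp reduce U, i.e. U = diag(U1, U2) *)
  (reducing U Us (ran P) /\ reducing U Us (ran (perp P))) /\
  (* H = (H^2 (x) E1) (+) (H^2 (x) E2) (+) K, with V1, V2 block diagonal *)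
  exists (K : hilbertSpace R) (W1 W1s W2 W2s : K -> K)
         (Phi : H -> (nat -> E) * (nat -> E) * K),
    [/\ hs_unitary W1 W1s, hs_unitary W2 W2s, commute_op W1 W2 &
    (* Phi maps into (H^2 (x) E1) (+) (H^2 (x) E2) (+) K *)
    (forall (x : H) (n : nat), ran P ((Phi x).1.1 n) /\ ran (perp P) ((Phi x).1.2 n)) /\
    (forall (c : R[i]) (x y : H),
        [/\ forall n, (Phi (c *: x + y)).1.1 n = c *: (Phi x).1.1 n + (Phi y).1.1 n,
            forall n, (Phi (c *: x + y)).1.2 n = c *: (Phi x).1.2 n + (Phi y).1.2 n
          & (Phi (c *: x + y)).2 = c *: (Phi x).2 + (Phi y).2]) /\
    (forall x y : H, exists s1 s2 : R[i],
        [/\ series_to (fun n => << (Phi x).1.1 n, (Phi y).1.1 n >>) s1,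
            series_to (fun n => << (Phi x).1.2 n, (Phi y).1.2 n >>) s2
          & << x, y >> = s1 + s2 + << (Phi x).2, (Phi y).2 >>]) /\
    (forall (a1 a2 : nat -> E) (k : K),
        (forall n, ran P (a1 n)) -> (forall n, ran (perp P) (a2 n)) ->
        sq_summable a1 -> sq_summable a2 ->
        exists x : H, [/\ forall n, (Phi x).1.1 n = a1 n,
                          forall n, (Phi x).1.2 n = a2 n & (Phi x).2 = k]) /\
    (* Phi V1 = (M_z (x) I_E1  (+)  I (x) U2^*  (+)  W1) Phi,
       Phi V2 = (I (x) U1  (+)  M_z (x) I_E2  (+)  W2) Phi,
       where U1 = U|E1, U2 = U|E2 (so U2^* = U^*|E2) *)
    (forall x : H,
        [/\ forall n, (Phi (V1 x)).1.1 n = shift (Phi x).1.1 n,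
            forall n, (Phi (V1 x)).1.2 n = Us ((Phi x).1.2 n)
          & (Phi (V1 x)).2 = W1 (Phi x).2] /\
        [/\ forall n, (Phi (V2 x)).1.1 n = U ((Phi x).1.1 n),
            forall n, (Phi (V2 x)).1.2 n = shift (Phi x).1.2 n
          & (Phi (V2 x)).2 = W2 (Phi x).2])].
Proof.
have UP' := UP hV1 hV2 hdef hP hU hW1 hW2 hlin hip hsurj hint.
have UsP' := UsP hV1 hV2 hdef hP hU hW1 hW2 hlin hip hsurj hint.
have Uperp' := Uperp hV1 hV2 hdef hP hU hW1 hW2 hlin hip hsurj hint.
have Usperp' := Usperp hV1 hV2 hdef hP hU hW1 hW2 hlin hip hsurj hint.
have Pl := Plin hP; have pl := perp_lin hP; have Ul := Ulin hU; have Usl := Uslin hU.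
split.
  split => x [y <-]; split.
  - by exists (U y); rewrite UP'.
  - by exists (Us y); rewrite UsP'.
  - by exists (U y); rewrite Uperp'.
  - by exists (Us y); rewrite Usperp'.
exists Hu, Wu1, Wu1s, Wu2, Wu2s,
  (fun x => ((fun n => iter n U (P ((Phi x).1 n))),
             (fun n => iter n Us (perp P ((Phi x).1 n))), (Phi x).2)).
split => //.
split.
  move=> x n /=; split.
    by exists (iter n U ((Phi x).1 n)); rewrite iter_comm.
  by exists (iter n Us ((Phi x).1 n)); rewrite iter_comm.
split.
  move=> c x y /=; have [l1 l2] := hlin c x y.
  split => [n|n|] //; rewrite l1.
    by rewrite Pl (iter_lin n Ul).
  by rewrite pl (iter_lin n Usl).
split.
  move=> x y /=.
  have sqPa : sq_summable (fun n => P ((Phi x).1 n)).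
    apply: (series_mono _ _ (hip x x)) => n; first exact: hs_ip_ge0.
    exact: normP_le.
  have [x1 [hx1 hx2]] := hsurj 0 sqPa.
  have hs1 : series_to (fun n => << P ((Phi x).1 n), P ((Phi y).1 n) >>)
      (<< x1, y >> - << (Phi x1).2, (Phi y).2 >>).
    by apply: series_ext (hip x1 y) => n; rewrite hx1 (ipP_r hP).
  have hs2 := series_sub (hip x y) hs1.
  exists (<< x1, y >> - << (Phi x1).2, (Phi y).2 >>),
    ((<< x, y >> - << (Phi x).2, (Phi y).2 >>) - (<< x1, y >> - << (Phi x1).2, (Phi y).2 >>)).
  split.
  - by apply: series_ext hs1 => n; rewrite iter_ip //; exact: (Uip hU).
  - apply: series_ext hs2 => n; rewrite iter_ip; last by exact: (Usip hU).
    by rewrite (ip_split hP ((Phi x).1 n)) addrC addKr.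
  - by ring.
split.
  move=> a1 a2 k h1 h2 sq1 sq2.
  pose a n := iter n Us (a1 n) + iter n U (a2 n).
  have Pa n : P (a n) = iter n Us (a1 n).
    rewrite /a (linD Pl) -(iter_comm _ _ UsP') -(iter_comm _ _ UP') (ranP hP (h1 n)) (ranperp hP (h2 n)).
    by rewrite (lin0 (iter_lin n Ul)) addr0.
  have pa n : perp P (a n) = iter n U (a2 n).
    by rewrite {1}/perp Pa /a addrC addKr.
  have sqa : sq_summable a.
    case: sq1 => l1 s1; case: sq2 => l2 s2; exists (l1 + l2).
    apply: series_ext (series_add s1 s2) => n.
    by rewrite (ip_split hP (a n)) Pa pa !iter_ip //; [exact: (Uip hU) | exact: (Usip hU)].
  have [x [e1 e2]] := hsurj k sqa.
  exists x; split => [n|n|] /=.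
  - by rewrite e1 Pa iter_cancel //; exact: (UUs hU).
  - by rewrite e1 pa iter_cancel //; exact: (UsU hU).
  - by [].
move=> x; have [i1 [i2 [i3 i4]]] := hint x.
split; split => [n|n|] /=.
- rewrite i1 /Mphi1 -UsP' (linD Pl) (Pperp hP) (PP hP) add0r.
  case: n => [|n] /=; first by rewrite (lin0 Pl) (lin0 Usl).
  by rewrite -iterS iterSr (UUs hU).
- rewrite i1 /Mphi1 -Usperp' (linD pl) (perpperp hP) (perpP hP) addr0.
  by rewrite -iterSr iterS.
- by rewrite i2.
- rewrite i3 /Mphi2 (linD Pl) (PP hP) (Pperp hP) addr0 -UP'.
  by rewrite -iterSr iterS.
- rewrite i3 /Mphi2 (linD pl) (perpP hP) (perpperp hP) add0r -Uperp'.
  case: n => [|n] /=; first by rewrite (lin0 pl) (lin0 Ul).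
  by rewrite -iterS iterSr (UsU hU).
- by rewrite i4.
Qed.
End Final.

Theorem theorem2p4 (R : realType) (H : hilbertSpace R) (V1 V1s V2 V2s : H -> H)
  (hV1 : hs_isometry V1 V1s) (hV2 : hs_isometry V2 V2s)
  (hcomm : commute_op V1 V2) (hdef : defect_zero V1 V1s V2 V2s)
  (E : hilbertSpace R) (P U Us : E -> E)
  (hBCL : is_BCL_triple V1 V2 P U Us) :
  (* E1 = ran P and E2 = ran P^perp reduce U, i.e. U = diag(U1, U2) *)
  (reducing U Us (ran P) /\ reducing U Us (ran (perp P))) /\
  (* H = (H^2 (x) E1) (+) (H^2 (x) E2) (+) K, with V1, V2 block diagonal *)
  exists (K : hilbertSpace R) (W1 W1s W2 W2s : K -> K)
         (Phi : H -> (nat -> E) * (nat -> E) * K),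
    [/\ hs_unitary W1 W1s, hs_unitary W2 W2s, commute_op W1 W2 &
    (* Phi maps into (H^2 (x) E1) (+) (H^2 (x) E2) (+) K *)
    (forall (x : H) (n : nat), ran P ((Phi x).1.1 n) /\ ran (perp P) ((Phi x).1.2 n)) /\
    (* Phi is linear *)
    (forall (c : R[i]) (x y : H),
        [/\ forall n, (Phi (c *: x + y)).1.1 n = c *: (Phi x).1.1 n + (Phi y).1.1 n,
            forall n, (Phi (c *: x + y)).1.2 n = c *: (Phi x).1.2 n + (Phi y).1.2 n
          & (Phi (c *: x + y)).2 = c *: (Phi x).2 + (Phi y).2]) /\
    (* Phi preserves inner products *)
    (forall x y : H, exists s1 s2 : R[i],
        [/\ series_to (fun n => << (Phi x).1.1 n, (Phi y).1.1 n >>) s1,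
            series_to (fun n => << (Phi x).1.2 n, (Phi y).1.2 n >>) s2
          & << x, y >> = s1 + s2 + << (Phi x).2, (Phi y).2 >>]) /\
    (* Phi is onto (H^2 (x) E1) (+) (H^2 (x) E2) (+) K *)
    (forall (a1 a2 : nat -> E) (k : K),
        (forall n, ran P (a1 n)) -> (forall n, ran (perp P) (a2 n)) ->
        sq_summable a1 -> sq_summable a2 ->
        exists x : H, [/\ forall n, (Phi x).1.1 n = a1 n,
                          forall n, (Phi x).1.2 n = a2 n & (Phi x).2 = k]) /\
    (* Phi V1 = (M_z (x) I_E1  (+)  I (x) U2^*  (+)  W1) Phi,
       Phi V2 = (I (x) U1  (+)  M_z (x) I_E2  (+)  W2) Phi,
       where U1 = U|E1, U2 = U|E2 (so U2^* = U^*|E2) *)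
    (forall x : H,
        [/\ forall n, (Phi (V1 x)).1.1 n = shift (Phi x).1.1 n,
            forall n, (Phi (V1 x)).1.2 n = Us ((Phi x).1.2 n)
          & (Phi (V1 x)).2 = W1 (Phi x).2] /\
        [/\ forall n, (Phi (V2 x)).1.1 n = U ((Phi x).1.1 n),
            forall n, (Phi (V2 x)).1.2 n = shift (Phi x).1.2 n
          & (Phi (V2 x)).2 = W2 (Phi x).2])].
Proof.
case: hBCL => hP hU [Hu [Wu1 [Wu1s [Wu2 [Wu2s [Phi [hW1 hW2 hWc [hlin [hip [hsurj hint]]]]]]]]]].
exact: (final hV1 hV2 hdef hP hU hW1 hW2 hWc hlin hip hsurj hint).
Qed.
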